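(* Let $n=p_1^{\alpha_1}p_2^{\alpha_2}\cdots p_t^{\alpha_t}$ with primes $p_1<\cdots<p_t$, $t\ge1$, and all $\alpha_i\ge1$. Then $$\mathrm{IR}(X_n)\le\left(1+2\cdot\frac{p_1}{p_t}\cdot\frac{1}{p_1^{\alpha_1-1}p_2^{\alpha_2-1}\cdots p_t^{\alpha_t-1}}\right)\alpha(X_n).$$
   Context: $X_n$ is the graph on $\{0,\dots,n-1\}$ with $a,b$ adjacent iff $\gcd(a-b,n)=1$. $\alpha(G)$ is the independence number. A set $S$ is irredundant if every $v\in S$ has a private neighbor, i.e. a vertex in $N[v]\setminus N[S\setminus\{v\}]$ (closed neighborhoods); $\mathrm{IR}(G)$ is the maximum size of an irredundant set. *)

(* Defs.v *)
From HB Require Import structures.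
From mathcomp Require Import all_boot all_order all_algebra.
Set Implicit Arguments. Unset Strict Implicit. Unset Printing Implicit Defensive.

(* The unitary Cayley graph X_n on {0,...,n-1}: a ~ b iff gcd(a-b, n) = 1.
   |a - b| is computed as maxn a b - minn a b; gcd with n is sign-invariant. *)
Definition Xadj (n : nat) (a b : 'I_n) : bool :=
  coprime (maxn a b - minn a b) n.

Definition cnbhd (n : nat) (v : 'I_n) : {set 'I_n} :=
  [set u | (u == v) || Xadj v u].

Definition cnbhdS (n : nat) (S : {set 'I_n}) : {set 'I_n} :=
  \bigcup_(v in S) cnbhd v.

Definition independent (n : nat) (S : {set 'I_n}) : bool :=
  [forall u in S, forall v in S, ~~ Xadj u v].

Definition irredundant (n : nat) (S : {set 'I_n}) : bool :=
  [forall v in S, exists u, (u \in cnbhd v) && (u \notin cnbhdS (S :\ v))].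

Definition alphaX (n : nat) : nat :=
  \max_(S : {set 'I_n} | independent S) #|S|.

Definition IRX (n : nat) : nat :=
  \max_(S : {set 'I_n} | irredundant S) #|S|.

(* Main.v *)
Require Import Defs.
From HB Require Import structures.
From mathcomp Require Import all_boot all_order all_algebra.
From mathcomp Require Import ring.
Import Order.TTheory GRing.Theory Num.Theory.

Module Helpers.
Set Implicit Arguments. Unset Strict Implicit.

Lemma dvd_dist q x y : (q %| maxn x y - minn x y) = (x == y %[mod q]).
Proof.
case: (leqP x y) => h.
  by rewrite -eqn_mod_dvd // eq_sym.
by rewrite -eqn_mod_dvd // ltnW.
Qed.

Lemma XadjC n (a b : 'I_n) : Xadj a b = Xadj b a.
Proof. by rewrite /Xadj maxnC minnC. Qed.

Lemma Xadj_irr n (hn : 1 < n) (a : 'I_n) : Xadj a a = false.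
Proof. by rewrite /Xadj maxnn minnn subnn /coprime gcd0n gtn_eqF. Qed.

Lemma adj_mod n (a b : 'I_n) q : Xadj a b -> prime q -> q %| n -> a %% q != b %% q.
Proof.
move=> cop qp qn; apply/negP => /eqP e.
have H : (q %| gcdn (maxn a b - minn a b) n).
  by rewrite dvdn_gcd qn dvd_dist e eqxx.
move: cop H; rewrite /Xadj /coprime => /eqP ->; rewrite dvdn1 => /eqP q1.
by rewrite q1 in qp.
Qed.

Lemma nadj_mod n (a b : 'I_n) : 0 < n -> ~~ Xadj a b ->
  exists2 q, prime q & q %| n /\ a %% q = b %% q.
Proof.
move=> n0 nc.
set g := gcdn (maxn a b - minn a b) n.
have g0 : 0 < g by rewrite gcdn_gt0 n0 orbT.
have g1 : 1 < g by rewrite ltn_neqAle eq_sym nc g0.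
exists (pdiv g); first exact: pdiv_prime.
split; first exact: dvdn_trans (pdiv_dvd g) (dvdn_gcdr _ _).
apply/eqP; rewrite -dvd_dist; exact: dvdn_trans (pdiv_dvd g) (dvdn_gcdl _ _).
Qed.

Lemma adj_trans n (x y w : 'I_n) : 0 < n ->
  (forall q, prime q -> q %| n -> x %% q = y %% q) -> Xadj x w -> Xadj y w.
Proof.
move=> n0 h hx; apply/negPn/negP => hy.
case: (nadj_mod n0 hy) => q qp [qn e].
by have := adj_mod hx qp qn; rewrite (h q qp qn) e eqxx.
Qed.

Lemma privP n (S : {set 'I_n}) v w : w \notin cnbhdS (S :\ v) ->
  forall x, x \in S -> x != v -> (w != x) && ~~ Xadj x w.
Proof.
move=> hw x xS xv.
have : w \notin cnbhd x.
  apply: contra hw => hx; apply/bigcupP; exists x => //; by rewrite !inE xv xS.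
by rewrite inE negb_or.
Qed.

Lemma priv_nonisol n (hn : 1 < n) (S : {set 'I_n}) v x :
  irredundant S -> v \in S -> x \in S -> Xadj v x ->
  exists w, Xadj v w /\ forall u, u \in S -> u != v -> ~~ Xadj u w.
Proof.
move=> /forall_inP irr vS xS vx.
case/existsP: (irr v vS) => w /andP [wv wp].
exists w; split; last by move=> u uS uv; case/andP: (privP wp uS uv).
move: wv; rewrite inE => /orP [/eqP wv|//]; subst w.
have xv : x != v by apply: contraTneq vx => ->; rewrite Xadj_irr.
by case/andP: (privP wp xS xv) => _; rewrite XadjC vx.
Qed.

Lemma twin n (hn : 1 < n) (S : {set 'I_n}) u v x :
  irredundant S -> u \in S -> v \in S -> u != v -> x \in S -> Xadj v x ->
  (forall q, prime q -> q %| n -> u %% q = v %% q) -> False.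
Proof.
move=> irr uS vS uv xS vx h.
case: (priv_nonisol hn irr vS xS vx) => w [vw hw].
have : Xadj u w.
  apply: (adj_trans (ltnW hn) _ vw) => q qp qn; by rewrite h.
by rewrite (negbTE (hw u uS uv)).
Qed.

Definition Lq n := \prod_(q <- primes n | q != max_pdiv n) q.

Lemma Lq_gt0 n : 0 < Lq n.
Proof.
rewrite /Lq big_seq_cond big_mkcond /=; apply: prodn_gt0 => q.
case: ifP => // /andP [qp _].
by rewrite mem_primes in qp; case/and3P: qp => qp _ _; exact: prime_gt0.
Qed.

Lemma modL n q x y : prime q -> q %| n -> q != max_pdiv n -> 0 < n ->
  x %% Lq n = y %% Lq n -> x %% q = y %% q.
Proof.
move=> qp qn qm n0 e.
have qL : q %| Lq n.
  have qin : q \in primes n by rewrite mem_primes qp n0 qn.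
  rewrite /Lq -big_filter (bigD1_seq q) ?dvdn_mulr //.
    by rewrite mem_filter qm qin.
  by rewrite filter_uniq // primes_uniq.
by rewrite -(modn_dvdm x qL) e (modn_dvdm y qL).
Qed.

Definition nonisol n (S : {set 'I_n}) (v : 'I_n) := [exists x in S, Xadj v x].

Lemma fiber n (hn : 1 < n) (S : {set 'I_n}) a b c :
  irredundant S -> a \in S -> b \in S -> c \in S ->
  nonisol S a -> nonisol S b -> nonisol S c ->
  a != b -> b != c -> c != a ->
  a %% Lq n = b %% Lq n -> a %% Lq n = c %% Lq n -> False.
Proof.
move=> irr aS bS cS /existsP [xa /andP [xaS axa]] _ /existsP [xc /andP [xcS cxc]]
  ab bc ca eab eac.
have n0 : 0 < n by exact: ltnW.
case: (priv_nonisol hn irr aS xaS axa) => w [aw hw].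
have key : forall u, u \in S -> u != a -> u %% Lq n = a %% Lq n ->
    u %% max_pdiv n = w %% max_pdiv n.
  move=> u uS ua eu.
  case: (nadj_mod n0 (hw u uS ua)) => q qp [qn e].
  case: (eqVneq q (max_pdiv n)) => [<- //|qm].
  have := adj_mod aw qp qn.
  by rewrite -(modL qp qn qm n0 eu) e eqxx.
have ba : b != a by rewrite eq_sym.
have hb := key b bS ba (esym eab).
have hc := key c cS ca (esym eac).
apply: (twin hn irr bS cS bc xcS cxc) => q qp qn.
case: (eqVneq q (max_pdiv n)) => [->|qm]; first by rewrite hb hc.
by apply: (modL qp qn qm n0); rewrite -eab -eac.
Qed.

Lemma card_non n (hn : 1 < n) (S : {set 'I_n}) : irredundant S ->
  #|S :&: [set v | nonisol S v]| <= 2 * Lq n.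
Proof.
move=> irr.
set A := S :&: _.
pose f := fun v : 'I_n => Ordinal (ltn_pmod v (Lq_gt0 n)).
rewrite -sum1_card (partition_big f predT) //=.
have H : forall j, \sum_(i | (i \in A) && (f i == j)) 1 <= 2.
  move=> j; rewrite sum1_card leqNgt; apply/negP.
  move=> /card_gt2P [x [y [z [[hx hy hz] [xy yz zx]]]]].
  move: hx hy hz; rewrite -!topredE /= !inE => /andP [/andP [xS xi] /eqP fx]
    /andP [/andP [yS yi] /eqP fy] /andP [/andP [zS zi] /eqP fz].
  apply: (fiber hn irr xS yS zS xi yi zi xy yz zx).
    by have := congr1 val fx; have := congr1 val fy => /= -> ->.
  by have := congr1 val fx; have := congr1 val fz => /= -> ->.
apply: (@leq_trans (\sum_(j < Lq n) 2)).
  by apply: leq_sum => j _; exact: H.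
by rewrite sum_nat_const card_ord mulnC.
Qed.

Lemma IR_nat n (hn : 1 < n) : IRX n <= alphaX n + 2 * Lq n.
Proof.
apply/bigmax_leqP => S irr.
rewrite -(cardsID [set v | nonisol S v] S) addnC.
apply: leq_add; last exact: card_non.
apply: leq_bigmax_cond.
apply/forall_inP => u; rewrite !inE => /andP [/negP uB uS].
apply/forall_inP => v; rewrite !inE => /andP [_ vS].
apply/negP => uv; apply: uB; apply/existsP; exists v; by rewrite vS uv.
Qed.

Lemma alpha_lb n (hn : 1 < n) : n <= pdiv n * alphaX n.
Proof.
set p1 := pdiv n.
have p0 : 0 < p1 by exact: prime_gt0 (pdiv_prime hn).
have nk : n = n %/ p1 * p1 by rewrite divnK // pdiv_dvd.
have lt (i : 'I_(n %/ p1)) : i * p1 < n.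
  by rewrite [X in _ < X]nk ltn_pmul2r.
pose f := fun i : 'I_(n %/ p1) => Ordinal (lt i).
have finj : injective f.
  move=> i j /(congr1 val) /= /eqP; rewrite eqn_pmul2r // => /eqP; exact: val_inj.
have indep : independent (f @: setT).
  apply/forall_inP => u /imsetP [i _ ->]; apply/forall_inP => v /imsetP [j _ ->].
  apply/negP => h; have := adj_mod h (pdiv_prime hn) (pdiv_dvd n).
  by rewrite /= !modnMl eqxx.
have := @leq_bigmax_cond _ (fun S : {set 'I_n} => independent S) (fun S => #|S|) _ indep.
rewrite card_imset // cardsT card_ord => h.
rewrite {1}nk mulnC leq_pmul2l //.
Qed.

Lemma n_decomp n (hn : 1 < n) :
  n = Lq n * max_pdiv n * \prod_(p <- primes n) p ^ (logn p n).-1.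
Proof.
have n0 : 0 < n by exact: ltnW.
have := prod_prime_decomp n0; rewrite prime_decompE big_map /= => e.
rewrite {1}e.
rewrite (eq_big_seq (fun p => p ^ (logn p n).-1 * p)); last first.
  by move=> p pin; rewrite -expnSr prednK // logn_gt0.
rewrite big_split /=.
have pin : max_pdiv n \in primes n.
  by rewrite mem_primes max_pdiv_prime // n0 max_pdiv_dvd.
rewrite [\prod_(i <- primes n) i](bigD1_seq (max_pdiv n) pin (primes_uniq n)) /= -/(Lq n).
by rewrite mulnC; congr (_ * _); exact: mulnC.
Qed.

End Helpers.
Import Helpers.
Local Open Scope ring_scope.

Theorem corollary5p5 (n : nat) (hn : (1 < n)%N) :
  (IRX n)%:R <=
    (1 + 2 * ((pdiv n)%:R / (max_pdiv n)%:R)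
           * ((\prod_(p <- primes n) p ^ (logn p n).-1)%N%:R)^-1)
    * (alphaX n)%:R :> rat.
Proof.
set M := (\prod_(p <- primes n) p ^ (logn p n).-1)%N.
have M0 : (0 < M)%N.
  rewrite /M big_seq big_mkcond /=; apply: prodn_gt0 => p.
  case: ifP => // pin; rewrite expn_gt0.
  by rewrite mem_primes in pin; case/and3P: pin => pp _ _; rewrite prime_gt0.
have P0 : (0 < max_pdiv n)%N by exact: prime_gt0 (max_pdiv_prime hn).
have hIR := IR_nat hn.
have hal := alpha_lb hn.
have hdec := n_decomp hn; rewrite -/M in hdec.
have h1 : (IRX n)%:R <= (alphaX n)%:R + (2 * Lq n)%:R :> rat.
  by rewrite -natrD ler_nat.
apply: le_trans h1 _.
rewrite mulrDl mul1r lerD2l.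
have -> : 2 * ((pdiv n)%:R / (max_pdiv n)%:R) * (M%:R)^-1 * (alphaX n)%:R
    = (2 * pdiv n * alphaX n)%:R / (max_pdiv n * M)%:R :> rat.
  rewrite !natrM; field.
  by rewrite !pnatr_eq0 -!lt0n M0 P0.
have z0 : 0 < (max_pdiv n * M)%:R :> rat by rewrite ltr0n muln_gt0 P0 M0.
rewrite (ler_pdivlMr _ _ z0) -natrM ler_nat.
rewrite -!mulnA leq_pmul2l // mulnA -hdec.
exact: hal.
Qed.
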